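(* Let $\kappa$ be a regular infinite cardinal and let $\langle W^\kappa,(T_i)_{i\in\{a,b\}},\theta\rangle$ be the $*$-type space described in the context. Then: (i) $\{h\}^{W^\kappa}=[X_0^\kappa=h]$, $\{t\}^{W^\kappa}=[X_0^\kappa=t]$, and $\mathrm{dp}(\{h\})=\mathrm{dp}(\{t\})=0$; (ii) for every $i\in\{a,b\}$ and $0\le\beta<\kappa$ there are $\kappa$-expressions $\varphi_i^0(\beta),\varphi_i^1(\beta)$ of depth $\beta+1$ with $(\varphi_i^1(\beta))^{W^\kappa}=[X_i^\kappa(\beta)=1]$ and $(\varphi_i^0(\beta))^{W^\kappa}=[X_i^\kappa(\beta)=0]$; (iii) for every $i\in\{a,b\}$ and limit ordinal $\lambda<\kappa$ there are $\kappa$-expressions $\varphi_i^{\rm even}(\lambda),\varphi_i^{\rm odd}(\lambda)$ of depth $\lambda$ with $(\varphi_i^{\rm even}(\lambda))^{W^\kappa}=[\lambda\text{-par}(X_i^\kappa)=\text{even}]$ and $(\varphi_i^{\rm odd}(\lambda))^{W^\kappa}=[\lambda\text{-par}(X_i^\kappa)=\text{odd}]$.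
   Context: Records: for $\alpha\ge1$, a record of length $\alpha$ is $r\in\{0,1\}^\alpha$ such that for every limit $\lambda\le\alpha$ there is $\gamma<\lambda$ with $r(\beta)=0$ for $\gamma\le\beta<\lambda$. Parity: finite ordinals usual (0 even); infinite $\hat\lambda+n$ ($\hat\lambda$ limit) has the parity of $n$. For limit $\lambda\le\alpha$, $o^\lambda(r)$ is the least ordinal $<\lambda$ after which $r$ is $0$ below $\lambda$; $\lambda\text{-par}(r)$ is its parity. $W^0=\{h,t\}$; $W^\alpha$ ($\alpha\ge1$) = triples $(w_0,w_a^\alpha,w_b^\alpha)$, $w_0\in\{h,t\}$, $w_a^\alpha,w_b^\alpha$ records of length $\alpha$; $w^\alpha\upharpoonright\beta$ restricts both records (and $w^\alpha\upharpoonright0=w_0$); $\pi_{\beta,\alpha}(w^\alpha)=w^\alpha\upharpoonright\beta$. For $i\in\{a,b\}$, $j$ the other player, $P_i(w^\alpha)$: set of $v^\alpha$ with $v_i^\alpha=w_i^\alpha$; $w_i^\alpha(0)=1\Rightarrow v_0=w_0$; $w_i^\alpha(\beta+1)=1\Rightarrow v_j^\alpha(\beta)=w_j^\alpha(\beta)$ ($\beta+1<\alpha$); $w_i^\alpha(\lambda)=1\Rightarrow\lambda\text{-par}(v_j^\alpha)=\lambda\text{-par}(w_j^\alpha)$ (limit $\lambda<\alpha$). $T_a,T_b$ map $W^\kappa$ into finitely additive probability measures on $\mathrm{Pow}(W^\kappa)$ and satisfy for all $w^\kappa$: (a) $T_i$ constant on $P_i(w^\kappa)$; (b) $T_i(w^\kappa)(P_i(w^\kappa))=1$;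 (c) $T_i(w^\kappa)([X_0^\kappa=w_0])=1$ if $w_i^\kappa(0)=1$, $\frac12$ otherwise; (d) for $\beta<\kappa$, $T_i(w^\kappa)([X_j^\kappa(\beta)=w_j^\kappa(\beta)])=1$ if $w_i^\kappa(\beta+1)=1$, $\frac12$ otherwise; (e) for limit $\lambda<\kappa$, $T_i(w^\kappa)([\lambda\text{-par}(X_j^\kappa)=\lambda\text{-par}(w_j^\kappa)])=1$ if $w_i^\kappa(\lambda)=1$, $\frac12$ otherwise; (f) for $\beta<\alpha<\kappa$, $E^\beta\subseteq W^\beta$, $u^\kappa\upharpoonright\alpha=w^\kappa\upharpoonright\alpha$ implies equal $T_i$-values on $\pi_{\beta,\kappa}^{-1}(E^\beta)$. $\theta(w^\kappa)=w_0$. Notation: $[X_0^\kappa=c]=\{u:u_0=c\}$, $[X_i^\kappa(\beta)=c]=\{u:u_i^\kappa(\beta)=c\}$, $[\lambda\text{-par}(X_i^\kappa)=e]=\{u:\lambda\text{-par}(u_i^\kappa)=e\}$. $\kappa$-expressions over $\Sigma_S=\mathrm{Pow}(\{h,t\})$, $I=\{a,b\}$: least set containing each $E\subseteq\{h,t\}$ and closed under $\neg$, $B_i^p$ ($p\in[0,1]$), and conjunctions of fewer than $\kappa$ (nonempty) expressions. Semantics: $E^{W^\kappa}=\theta^{-1}(E)$, complement, $(B_i^p\varphi)^{W^\kappa}=\{w:T_i(w)(\varphi^{W^\kappa})\ge p\}$, intersection. Depth: $\mathrm{dp}(E)=0$, $\mathrm{dp}(\neg\varphi)=\mathrm{dp}(\varphi)$,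 $\mathrm{dp}(B_i^p\varphi)=\mathrm{dp}(\varphi)+1$, $\mathrm{dp}(\bigwedge\Psi)=\sup_{\varphi\in\Psi}\mathrm{dp}(\varphi)$. *)

(* Defs.v *)
From Stdlib Require Import Reals.
Local Open Scope R_scope.

Section Kappa.
Variables (K : Type) (lt : K -> K -> Prop).

Definition le (x y : K) : Prop := lt x y \/ x = y.
Definition is_zero (z : K) : Prop := forall x, ~ lt x z.
Definition is_succ (b s : K) : Prop := lt b s /\ forall x, lt b x -> le s x.
Definition is_limit (l : K) : Prop :=
  (exists x, lt x l) /\ forall x, lt x l -> exists y, lt x y /\ lt y l.
Definition is_sup {I : Type} (f : I -> K) (d : K) : Prop :=
  (forall i, le (f i) d) /\ forall d', (forall i, le (f i) d') -> le d d'.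

Definition injective {A B : Type} (f : A -> B) : Prop :=
  forall x y, f x = f y -> x = y.
Definition card_lt_K (A : Type) : Prop := ~ exists f : K -> A, injective f.

(** (K, lt) is (order-isomorphic to) a regular infinite cardinal kappa:
    a strict well-order, nonempty without maximum (a limit ordinal),
    every proper initial segment has smaller cardinality (initial ordinal),
    and every subset of cardinality < kappa is bounded (regularity). *)
Definition regular_infinite_cardinal : Prop :=
  (forall x, ~ lt x x) /\
  (forall x y z, lt x y -> lt y z -> lt x z) /\
  (forall x y, lt x y \/ x = y \/ lt y x) /\
  well_founded lt /\
  inhabited K /\
  (forall x, exists y, lt x y) /\
  (forall b, card_lt_K {x : K | lt x b}) /\
  (forall S : K -> Prop, card_lt_K {x : K | S x} ->
     exists b, forall x, S x -> lt x b).

(** parity: true = odd, false = even.  0 and limits are even, successors flip. *)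
Inductive Par : K -> bool -> Prop :=
| Par_zero z : is_zero z -> Par z false
| Par_limit l : is_limit l -> Par l false
| Par_succ b s e : is_succ b s -> Par b e -> Par s (negb e).

Definition tail_zero (r : K -> bool) (l g : K) : Prop :=
  forall b, le g b -> lt b l -> r b = false.
Definition is_record (r : K -> bool) : Prop :=
  (forall l, is_limit l -> exists g, lt g l /\ tail_zero r l g) /\
  (exists g, forall b, le g b -> r b = false).

Definition o_lam (l : K) (r : K -> bool) (g : K) : Prop :=
  lt g l /\ tail_zero r l g /\
  forall g', lt g' l -> tail_zero r l g' -> le g g'.
Definition lpar (l : K) (r : K -> bool) (e : bool) : Prop :=
  exists g, o_lam l r g /\ Par g e.

Inductive HT : Type := h | t.
Inductive player : Type := pa | pb.
Definition other (i : player) : player := match i with pa => pb | pb => pa end.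

Definition W : Type :=
  {x : HT * (K -> bool) * (K -> bool) | is_record (snd (fst x)) /\ is_record (snd x)}.
Definition w0 (w : W) : HT := fst (fst (proj1_sig w)).
Definition rec (i : player) (w : W) : K -> bool :=
  match i with pa => snd (fst (proj1_sig w)) | pb => snd (proj1_sig w) end.

Definition Pset (i : player) (w : W) (v : W) : Prop :=
  (forall b, rec i v b = rec i w b) /\
  (forall z, is_zero z -> rec i w z = true -> w0 v = w0 w) /\
  (forall b s, is_succ b s -> rec i w s = true ->
     rec (other i) v b = rec (other i) w b) /\
  (forall l, is_limit l -> rec i w l = true ->
     exists e, lpar l (rec (other i) v) e /\ lpar l (rec (other i) w) e).

Definition fa_prob (mu : (W -> Prop) -> R) : Prop :=
  (forall A, 0 <= mu A) /\
  mu (fun _ => True) = 1 /\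
  (forall A B, (forall x, A x -> B x -> False) ->
     mu (fun x => A x \/ B x) = mu A + mu B).

Definition agree (a : K) (u w : W) : Prop :=
  w0 u = w0 w /\ forall x, lt x a -> rec pa u x = rec pa w x /\ rec pb u x = rec pb w x.
(** E is of the form pi_{beta,kappa}^{-1}(E^beta) *)
Definition determined_by (b : K) (E : W -> Prop) : Prop :=
  forall u v, agree b u v -> (E u <-> E v).

Definition half_or_one (c : bool) : R := if c then 1 else / 2.

Definition star_type_space (T : player -> W -> (W -> Prop) -> R) : Prop :=
  (forall i w, fa_prob (T i w)) /\
  (forall i w v, Pset i w v -> forall A, T i v A = T i w A) /\
  (forall i w, T i w (Pset i w) = 1) /\
  (forall i w z, is_zero z ->
     T i w (fun u => w0 u = w0 w) = half_or_one (rec i w z)) /\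
  (forall i w b s, is_succ b s ->
     T i w (fun u => rec (other i) u b = rec (other i) w b)
       = half_or_one (rec i w s)) /\
  (forall i w l, is_limit l ->
     T i w (fun u => exists e, lpar l (rec (other i) u) e /\
                               lpar l (rec (other i) w) e)
       = half_or_one (rec i w l)) /\
  (forall i b a u w, lt b a -> agree a u w ->
     forall E, determined_by b E -> T i u E = T i w E).

(** kappa-expressions; conjunctions are indexed by {x | x <= b} for b < kappa,
    i.e. nonempty families of fewer than kappa expressions. *)
Inductive expr : Type :=
| EAtom (E : HT -> Prop)
| ENeg (phi : expr)
| EB (i : player) (p : R) (hp : 0 <= p <= 1) (phi : expr)
| EConj (b : K) (f : {x : K | le x b} -> expr).

Fixpoint sem (T : player -> W -> (W -> Prop) -> R) (phi : expr) (w : W) : Prop :=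
  match phi with
  | EAtom E => E (w0 w)
  | ENeg psi => ~ sem T psi w
  | EB i p _ psi => T i w (sem T psi) >= p
  | EConj b f => forall x, sem T (f x) w
  end.

Inductive Depth : expr -> K -> Prop :=
| Depth_atom E z : is_zero z -> Depth (EAtom E) z
| Depth_neg psi d : Depth psi d -> Depth (ENeg psi) d
| Depth_B i p hp psi d s : Depth psi d -> is_succ d s -> Depth (EB i p hp psi) s
| Depth_conj b f (ds : {x : K | le x b} -> K) d :
    (forall x, Depth (f x) (ds x)) -> is_sup ds d -> Depth (EConj b f) d.

End Kappa.

Arguments w0 {K lt}.
Arguments rec {K lt}.

(* Main.v *)
Require Import Defs.
From Stdlib Require Import Reals Lra Classical ClassicalEpsilon FunctionalExtensionality PropExtensionality.
Local Open Scope R_scope.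


Lemma o_irr {K lt} (hK : regular_infinite_cardinal K lt) x : ~ lt x x.
Proof. exact (proj1 hK x). Qed.
Lemma o_trans {K lt} (hK : regular_infinite_cardinal K lt) x y z : lt x y -> lt y z -> lt x z.
Proof. exact (proj1 (proj2 hK) x y z). Qed.
Lemma o_tri {K lt} (hK : regular_infinite_cardinal K lt) x y : lt x y \/ x = y \/ lt y x.
Proof. exact (proj1 (proj2 (proj2 hK)) x y). Qed.
Lemma o_wf {K lt} (hK : regular_infinite_cardinal K lt) : well_founded lt.
Proof. exact (proj1 (proj2 (proj2 (proj2 hK)))). Qed.
Lemma o_unb {K lt} (hK : regular_infinite_cardinal K lt) x : exists y, lt x y.
Proof. exact (proj1 (proj2 (proj2 (proj2 (proj2 (proj2 hK))))) x). Qed.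
Lemma o_inh {K lt} (hK : regular_infinite_cardinal K lt) : inhabited K.
Proof. exact (proj1 (proj2 (proj2 (proj2 (proj2 hK))))). Qed.

Lemma lt_le_false {K lt} (hK : regular_infinite_cardinal K lt) x y : lt x y -> le K lt y x -> False.
Proof. intros H [H'|E]; [exact (o_irr hK x (o_trans hK _ _ _ H H'))|subst; exact (o_irr hK _ H)]. Qed.

Lemma le_lt_trans {K lt} (hK : regular_infinite_cardinal K lt) x y z : le K lt x y -> lt y z -> lt x z.
Proof. intros [H|E] H'; [exact (o_trans hK _ _ _ H H')|subst; exact H']. Qed.

Lemma wf_min {K lt} (hK : regular_infinite_cardinal K lt) (P : K -> Prop) :
  (exists x, P x) -> exists m, P m /\ forall y, P y -> ~ lt y m.
Proof.
  intros [x Hx]. revert Hx. induction x as [x IH] using (well_founded_ind (o_wf hK)).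
  intros Hx. destruct (classic (exists y, P y /\ lt y x)) as [[y [Py Hy]]|N].
  - exact (IH y Hy Py).
  - exists x; split; [exact Hx|]. intros y Py Hy. apply N; eauto.
Qed.

Lemma zero_ex {K lt} (hK : regular_infinite_cardinal K lt) : exists z, is_zero K lt z.
Proof.
  destruct (o_inh hK) as [x].
  destruct (wf_min hK (fun _ => True)) as [m [_ Hm]]; [eauto|].
  exists m. intros y Hy. exact (Hm y I Hy).
Qed.

Lemma succ_ex {K lt} (hK : regular_infinite_cardinal K lt) b : exists s, is_succ K lt b s.
Proof.
  destruct (wf_min hK (fun y => lt b y)) as [m [Hm Hmin]]; [apply o_unb; exact hK|].
  exists m. split; [exact Hm|]. intros x Hx.
  destruct (o_tri hK m x) as [H|[H|H]]; [left; exact H|right; exact H|].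
  exfalso; exact (Hmin x Hx H).
Qed.

Lemma succ_uniq {K lt} (hK : regular_infinite_cardinal K lt) b s s' :
  is_succ K lt b s -> is_succ K lt b s' -> s = s'.
Proof.
  intros [H1 H2] [H1' H2'].
  destruct (o_tri hK s s') as [H|[H|H]]; [|exact H|].
  - exfalso. exact (lt_le_false hK _ _ H (H2' _ H1)).
  - exfalso. exact (lt_le_false hK _ _ H (H2 _ H1')).
Qed.

Lemma pred_uniq {K lt} (hK : regular_infinite_cardinal K lt) b b' s :
  is_succ K lt b s -> is_succ K lt b' s -> b = b'.
Proof.
  intros [H1 H2] [H1' H2'].
  destruct (o_tri hK b b') as [H|[H|H]]; [|exact H|].
  - exfalso. exact (lt_le_false hK _ _ H1' (H2 _ H)).
  - exfalso. exact (lt_le_false hK _ _ H1 (H2' _ H)).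
Qed.

Lemma classify {K lt} (hK : regular_infinite_cardinal K lt) g :
  is_zero K lt g \/ is_limit K lt g \/ exists b, is_succ K lt b g.
Proof.
  destruct (classic (is_zero K lt g)) as [Z|Z]; [left; exact Z|right].
  assert (E : exists x, lt x g).
  { apply NNPP; intro N; apply Z; intros x Hx; apply N; eauto. }
  destruct (classic (forall x, lt x g -> exists y, lt x y /\ lt y g)) as [L|L].
  - left; split; assumption.
  - right. apply not_all_ex_not in L. destruct L as [x Hx].
    exists x. split.
    + apply NNPP; intro N; apply Hx; intro; contradiction.
    + intros y Hy. destruct (o_tri hK g y) as [H|[H|H]]; [left; exact H|right; exact H|].
      exfalso; apply Hx; intros _; eauto.
Qed.

Lemma limit_not_succ {K lt} (hK : regular_infinite_cardinal K lt) b l :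
  is_limit K lt l -> is_succ K lt b l -> False.
Proof.
  intros [_ L] [H1 H2]. destruct (L b H1) as [y [Hy1 Hy2]].
  exact (lt_le_false hK _ _ Hy2 (H2 _ Hy1)).
Qed.

Lemma par_total {K lt} (hK : regular_infinite_cardinal K lt) g : exists e, Par K lt g e.
Proof.
  induction g as [g IH] using (well_founded_ind (o_wf hK)).
  destruct (classify hK g) as [Z|[L|[b B]]].
  - exists false; constructor; exact Z.
  - exists false; apply Par_limit; exact L.
  - destruct (IH b (proj1 B)) as [e He]. exists (negb e). eapply Par_succ; eauto.
Qed.

Lemma par_uniq {K lt} (hK : regular_infinite_cardinal K lt) g e1 e2 :
  Par K lt g e1 -> Par K lt g e2 -> e1 = e2.
Proof.
  revert e1 e2.
  induction g as [g IH] using (well_founded_ind (o_wf hK)).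
  intros e1 e2 H1 H2.
  destruct H1 as [z Z|l L|b s e B P]; inversion H2; subst; try reflexivity.
  all: try (exfalso; match goal with
     | Z : is_zero _ _ ?g, B : is_succ _ _ _ ?g |- _ => exact (Z _ (proj1 B))
     | Z : is_zero _ _ ?g, L : is_limit _ _ ?g |- _ => destruct L as [[x Hx] _]; exact (Z x Hx)
     | L : is_limit _ _ ?g, B : is_succ _ _ _ ?g |- _ => exact (limit_not_succ hK _ _ L B)
     end).
  match goal with
  | B : is_succ _ _ ?b ?g, B' : is_succ _ _ ?b' ?g |- _ =>
      assert (b' = b) by exact (pred_uniq hK _ _ _ B' B); subst b'
  end.
  f_equal. eapply IH; [exact (proj1 B)|eassumption|eassumption].
Qed.

Lemma rec_record {K lt} (i : player) (u : W K lt) : is_record K lt (rec i u).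
Proof. destruct u as [x [H1 H2]]; destruct i; simpl; assumption. Qed.

Lemma olam_ex {K lt} (hK : regular_infinite_cardinal K lt) l r :
  is_record K lt r -> is_limit K lt l -> exists g, o_lam K lt l r g.
Proof.
  intros [R _] L. destruct (wf_min hK (fun g => lt g l /\ tail_zero K lt r l g)) as [m [[H1 H2] Hm]].
  { destruct (R l L) as [g Hg]. exists g; exact Hg. }
  exists m. split; [exact H1|split; [exact H2|]].
  intros g' Hg' Tg'. destruct (o_tri hK m g') as [H|[H|H]]; [left; exact H|right; exact H|].
  exfalso; exact (Hm g' (conj Hg' Tg') H).
Qed.

Lemma olam_uniq {K lt} (hK : regular_infinite_cardinal K lt) l r g g' :
  o_lam K lt l r g -> o_lam K lt l r g' -> g = g'.
Proof.
  intros [A1 [A2 A3]] [B1 [B2 B3]].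
  destruct (A3 g' B1 B2) as [H|H]; [|exact H].
  exfalso. exact (lt_le_false hK _ _ H (B3 g A1 A2)).
Qed.

Lemma lpar_total {K lt} (hK : regular_infinite_cardinal K lt) l r :
  is_record K lt r -> is_limit K lt l -> exists e, lpar K lt l r e.
Proof.
  intros R L. destruct (olam_ex hK l r R L) as [g Hg].
  destruct (par_total hK g) as [e He]. exists e, g; auto.
Qed.

Lemma lpar_uniq {K lt} (hK : regular_infinite_cardinal K lt) l r e1 e2 :
  lpar K lt l r e1 -> lpar K lt l r e2 -> e1 = e2.
Proof.
  intros [g [G P]] [g' [G' P']].
  pose proof (olam_uniq hK _ _ _ _ G G'); subst g'.
  exact (par_uniq hK _ _ _ P P').
Qed.

Lemma mu_ext {A : Type} (mu : (A -> Prop) -> R) (P Q : A -> Prop) :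
  (forall u, P u <-> Q u) -> mu P = mu Q.
Proof.
  intros H. f_equal. apply functional_extensionality; intro u.
  apply propositional_extensionality; apply H.
Qed.

Lemma key {K lt} (mu : (W K lt -> Prop) -> R) (A B : W K lt -> Prop) (k : bool) :
  fa_prob K lt mu -> (forall u, A u \/ B u) -> (forall u, A u -> B u -> False) ->
  (mu A = half_or_one k \/ mu B = half_or_one k) ->
  ((mu A >= 1 \/ mu B >= 1) <-> k = true).
Proof.
  intros [P0 [P1 P2]] Cov Dis Hk.
  assert (S : mu A + mu B = 1).
  { rewrite <- (P2 A B Dis), <- P1. apply mu_ext. intro u; split; auto. }
  pose proof (P0 A); pose proof (P0 B).
  destruct k; simpl in Hk; split; intro H'; try reflexivity; try discriminate.
  - destruct Hk as [E|E]; [left|right]; lra.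
  - exfalso. destruct Hk as [E|E]; destruct H'; lra.
Qed.

Lemma lt_le_trans {K lt} (hK : regular_infinite_cardinal K lt) x y z : lt x y -> le K lt y z -> lt x z.
Proof. intros H [H'|E]; [exact (o_trans hK _ _ _ H H')|subst; exact H]. Qed.

Lemma sup_const {K lt} b (d : K) : is_sup K lt (fun _ : {x : K | le K lt x b} => d) d.
Proof.
  split; [intros; right; reflexivity|]. intros d' H.
  exact (H (exist _ b (or_intror eq_refl))).
Qed.

Lemma Q_of_P {K lt} (hK : regular_infinite_cardinal K lt)
  (T : player -> W K lt -> (W K lt -> Prop) -> R) (i : player) (l : K) :
  is_limit K lt l ->
  (forall d, lt d l -> exists (phi : expr K lt) (s : K), is_succ K lt d s /\ Depth K lt phi s /\
       forall w, sem K lt T phi w <-> rec i w d = true) ->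
  exists phie phio : expr K lt,
       Depth K lt phie l /\ Depth K lt phio l /\
       (forall w, sem K lt T phie w <-> lpar K lt l (rec i w) false) /\
       (forall w, sem K lt T phio w <-> lpar K lt l (rec i w) true).
Proof.
  intros L HP.
  assert (H' : forall d, {p : expr K lt * K | lt d l -> is_succ K lt d (snd p) /\ Depth K lt (fst p) (snd p) /\
       forall w, sem K lt T (fst p) w <-> rec i w d = true}).
  { intro d. apply constructive_indefinite_description.
    destruct (classic (lt d l)) as [Hd|Hd].
    - destruct (HP d Hd) as [phi [s Hs]]. exists (phi, s); intros _; exact Hs.
    - exists (EAtom K lt (fun _ => True), d); intro; contradiction. }
  pose (Phi := fun d => fst (proj1_sig (H' d))).
  pose (S := fun d => snd (proj1_sig (H' d))).
  assert (HPhi : forall d, lt d l -> is_succ K lt d (S d) /\ Depth K lt (Phi d) (S d) /\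
       forall w, sem K lt T (Phi d) w <-> rec i w d = true) by (intro d; exact (proj2_sig (H' d))).
  clearbody Phi S. clear H' HP.
  pose (Tail := fun g => EConj K lt l (fun x => if excluded_middle_informative (le K lt g (proj1_sig x) /\ lt (proj1_sig x) l) then ENeg K lt (Phi (proj1_sig x)) else ENeg K lt (Phi g))).
  assert (Tail_sem : forall g w, lt g l -> (sem K lt T (Tail g) w <-> tail_zero K lt (rec i w) l g)).
  { intros g w Hg. unfold Tail; simpl. split.
    - intros Hall b Hgb Hbl. specialize (Hall (exist _ b (or_introl Hbl))). simpl in Hall.
      destruct (excluded_middle_informative _) as [_|n]; [|exfalso; apply n; auto].
      simpl in Hall. destruct (rec i w b) eqn:E; [|reflexivity].
      exfalso; apply Hall. apply (HPhi b Hbl); exact E.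
    - intros Tz [x Hx]. simpl.
      destruct (excluded_middle_informative _) as [[c1 c2]|n]; simpl; intro Hs.
      + apply (HPhi x c2) in Hs. rewrite Tz in Hs by assumption. discriminate.
      + apply (HPhi g Hg) in Hs. rewrite Tz in Hs; [discriminate|right; reflexivity|exact Hg]. }
  assert (Tail_depth : forall g, lt g l -> Depth K lt (Tail g) l).
  { intros g Hg. unfold Tail.
    apply (Depth_conj K lt l _ (fun x => if excluded_middle_informative (le K lt g (proj1_sig x) /\ lt (proj1_sig x) l) then S (proj1_sig x) else S g)).
    - intros [x Hx]; simpl. destruct (excluded_middle_informative _) as [[c1 c2]|n]; constructor; apply HPhi; assumption.
    - split.
      + intros [x Hx]; simpl. destruct (excluded_middle_informative _) as [[c1 c2]|n].
        * apply (proj2 (proj1 (HPhi x c2))); exact c2.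
        * apply (proj2 (proj1 (HPhi g Hg))); exact Hg.
      + intros d' Hd'. destruct (o_tri hK l d') as [H|[H|H]]; [left; exact H|right; exact H|exfalso].
        destruct (o_tri hK g d') as [H1|[H1|H1]].
        * specialize (Hd' (exist _ d' (or_introl H))). simpl in Hd'.
          destruct (excluded_middle_informative _) as [_|n]; [|apply n; split; [left; exact H1|exact H]].
          exact (lt_le_false hK _ _ (proj1 (proj1 (HPhi d' H))) Hd').
        * subst d'. specialize (Hd' (exist _ g (or_introl H))). simpl in Hd'.
          destruct (excluded_middle_informative _) as [_|n]; [|apply n; split; [right; reflexivity|exact H]].
          exact (lt_le_false hK _ _ (proj1 (proj1 (HPhi g H))) Hd').
        * specialize (Hd' (exist _ g (or_introl Hg))). simpl in Hd'.
          destruct (excluded_middle_informative _) as [_|n]; [|apply n; split; [right; reflexivity|exact Hg]].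
          pose proof (lt_le_trans hK _ _ _ (proj1 (proj1 (HPhi g Hg))) Hd') as X.
          exact (o_irr hK _ (o_trans hK _ _ _ X H1)). }
  pose (O := fun g => EConj K lt g (fun x => if excluded_middle_informative (lt (proj1_sig x) g) then ENeg K lt (Tail (proj1_sig x)) else Tail g)).
  assert (O_sem : forall g w, lt g l -> (sem K lt T (O g) w <-> o_lam K lt l (rec i w) g)).
  { intros g w Hg. unfold O; simpl. split.
    - intros Hall.
      assert (Tg : tail_zero K lt (rec i w) l g).
      { specialize (Hall (exist _ g (or_intror eq_refl))). simpl in Hall.
        destruct (excluded_middle_informative _) as [c|_]; [exfalso; exact (o_irr hK _ c)|].
        apply Tail_sem; assumption. }
      split; [exact Hg|split; [exact Tg|]].
      intros g' Hg' Tg'. destruct (o_tri hK g g') as [H|[H|H]]; [left; exact H|right; exact H|exfalso].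
      specialize (Hall (exist _ g' (or_introl H))). simpl in Hall.
      destruct (excluded_middle_informative _) as [_|n]; [|exact (n H)].
      simpl in Hall. apply Hall. apply Tail_sem; assumption.
    - intros [_ [Tg Hmin]] [x Hx]; simpl.
      destruct (excluded_middle_informative _) as [c|n]; simpl.
      + intro Hs. assert (xl : lt x l) by exact (o_trans hK _ _ _ c Hg).
        apply (Tail_sem x w xl) in Hs. exact (lt_le_false hK _ _ c (Hmin x xl Hs)).
      + apply Tail_sem; assumption. }
  assert (O_depth : forall g, lt g l -> Depth K lt (O g) l).
  { intros g Hg. unfold O.
    apply (Depth_conj K lt g _ (fun _ => l)); [|apply sup_const].
    intros [x Hx]; simpl. destruct (excluded_middle_informative _) as [c|n].
    - constructor. apply Tail_depth. exact (o_trans hK _ _ _ c Hg).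
    - apply Tail_depth; exact Hg. }
  destruct (zero_ex hK) as [z0 Z0].
  assert (z0l : lt z0 l).
  { destruct L as [[x Hx] _]. destruct (o_tri hK z0 x) as [H|[H|H]].
    - exact (o_trans hK _ _ _ H Hx).
    - subst; exact Hx.
    - exfalso; exact (Z0 x H). }
  assert (Pz0 : Par K lt z0 false) by (constructor; exact Z0).
  pose (Ev := ENeg K lt (EConj K lt l (fun x => if excluded_middle_informative (lt (proj1_sig x) l /\ Par K lt (proj1_sig x) false) then ENeg K lt (O (proj1_sig x)) else ENeg K lt (O z0)))).
  assert (Ev_sem : forall w, sem K lt T Ev w <-> lpar K lt l (rec i w) false).
  { intro w. unfold Ev; simpl. split.
    - intro N. apply not_all_ex_not in N. destruct N as [[x Hx] N]. simpl in N.
      destruct (excluded_middle_informative _) as [[c1 c2]|n]; simpl in N; apply NNPP in N.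
      + exists x. split; [apply O_sem|]; assumption.
      + exists z0. split; [apply O_sem|]; assumption.
    - intros [g [G P]] Hall. pose proof (proj1 G) as gl.
      specialize (Hall (exist _ g (or_introl gl))). simpl in Hall.
      destruct (excluded_middle_informative _) as [_|n]; [|exact (n (conj gl P))].
      simpl in Hall. apply Hall. apply O_sem; assumption. }
  exists Ev, (ENeg K lt Ev). split; [|split; [|split]].
  - unfold Ev. constructor. apply (Depth_conj K lt l _ (fun _ => l)); [|apply sup_const].
    intros [x Hx]; simpl. destruct (excluded_middle_informative _) as [[c1 c2]|n]; constructor; apply O_depth; assumption.
  - unfold Ev. constructor. constructor. apply (Depth_conj K lt l _ (fun _ => l)); [|apply sup_const].
    intros [x Hx]; simpl. destruct (excluded_middle_informative _) as [[c1 c2]|n]; constructor; apply O_depth; assumption.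
  - exact Ev_sem.
  - intro w. change (~ sem K lt T Ev w <-> lpar K lt l (rec i w) true). rewrite Ev_sem.
    destruct (lpar_total hK l (rec i w) (rec_record i w) L) as [e He].
    split.
    + intro N. destruct e; [exact He|contradiction].
    + intros Ht Hf. discriminate (lpar_uniq hK _ _ _ _ Ht Hf).
Qed.

Lemma one_in : (0 <= 1 <= 1)%R.
Proof. lra. Qed.

Definition conj2 {K lt} (z2 : K) (A B : expr K lt) : expr K lt :=
  EConj K lt z2 (fun x => if excluded_middle_informative (proj1_sig x = z2) then A else B).

Definition Bdisj {K lt} (z2 : K) (i : player) (p1 p0 : expr K lt) : expr K lt :=
  ENeg K lt (conj2 z2 (ENeg K lt (EB K lt i 1 one_in p1)) (ENeg K lt (EB K lt i 1 one_in p0))).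

Lemma Bdisj_sem {K lt} (hK : regular_infinite_cardinal K lt) T z1 z2 i p1 p0 w :
  lt z1 z2 ->
  (sem K lt T (Bdisj z2 i p1 p0) w <-> (T i w (sem K lt T p1) >= 1 \/ T i w (sem K lt T p0) >= 1)).
Proof.
  intros H12. unfold Bdisj, conj2; simpl. split.
  - intro N. apply not_all_ex_not in N. destruct N as [[x Hx] N]. simpl in N.
    destruct (excluded_middle_informative _); simpl in N; apply NNPP in N; auto.
  - intros D Hall.
    pose proof (Hall (exist _ z2 (or_intror eq_refl))) as A1.
    pose proof (Hall (exist _ z1 (or_introl H12))) as A2. simpl in A1, A2.
    destruct (excluded_middle_informative (z2 = z2)) as [_|n]; [|exact (n eq_refl)].
    destruct (excluded_middle_informative (z1 = z2)) as [e|_]; [subst; exact (o_irr hK _ H12)|].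
    simpl in A1, A2. destruct D; auto.
Qed.

Lemma Bdisj_depth {K lt} z2 i (p1 p0 : expr K lt) d s :
  Depth K lt p1 d -> Depth K lt p0 d -> is_succ K lt d s -> Depth K lt (Bdisj z2 i p1 p0) s.
Proof.
  intros D1 D0 S. unfold Bdisj, conj2. constructor.
  apply (Depth_conj K lt z2 _ (fun _ => s)); [|apply sup_const].
  intros x. destruct (excluded_middle_informative _); constructor; econstructor; eauto.
Qed.

Lemma step {K lt} (hK : regular_infinite_cardinal K lt) T (hT : star_type_space K lt T)
  z1 z2 i p1 p0 (A B : W K lt -> Prop) (k : K) :
  lt z1 z2 ->
  (forall u, sem K lt T p1 u <-> A u) -> (forall u, sem K lt T p0 u <-> B u) ->
  (forall u, A u \/ B u) -> (forall u, A u -> B u -> False) ->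
  (forall w, T i w A = half_or_one (rec i w k) \/ T i w B = half_or_one (rec i w k)) ->
  forall w, sem K lt T (Bdisj z2 i p1 p0) w <-> rec i w k = true.
Proof.
  intros H12 E1 E0 Cov Dis Hw w.
  rewrite (Bdisj_sem hK T z1 z2 i p1 p0 w H12).
  rewrite (mu_ext (T i w) _ _ E1), (mu_ext (T i w) _ _ E0).
  apply key; auto. exact (proj1 hT i w).
Qed.

Lemma P_all {K lt} (hK : regular_infinite_cardinal K lt) T (hT : star_type_space K lt T) :
  forall b i, exists (phi : expr K lt) (s : K), is_succ K lt b s /\ Depth K lt phi s /\
       forall w, sem K lt T phi w <-> rec i w b = true.
Proof.
  destruct (zero_ex hK) as [z0 Z0]. destruct (succ_ex hK z0) as [s0 S0].
  pose proof (proj1 S0) as H01.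
  pose proof hT as hT'.
  destruct hT' as [Hfa [Ha [Hb [Hc [Hd [He Hf]]]]]].
  intro b. induction b as [b IH] using (well_founded_ind (o_wf hK)). intro i.
  destruct (succ_ex hK b) as [sb Sb].
  destruct (classify hK b) as [Z|[L|[g G]]].
  - exists (Bdisj s0 i (EAtom K lt (fun x => x = h)) (EAtom K lt (fun x => x = t))), sb.
    split; [exact Sb|split].
    + eapply Bdisj_depth; [constructor; exact Z|constructor; exact Z|exact Sb].
    + apply (step hK T hT z0 s0 i _ _ (fun u => w0 u = h) (fun u => w0 u = t) b H01).
      * intro u; simpl; tauto.
      * intro u; simpl; tauto.
      * intro u; destruct (w0 u); auto.
      * intros u E1 E2; rewrite E1 in E2; discriminate.
      * intro w. rewrite <- (Hc i w b Z). destruct (w0 w) eqn:E; [left|right];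
        apply mu_ext; intro u; tauto.
  - destruct (Q_of_P hK T (other i) b L (fun d Hd => IH d Hd (other i))) as [pe [po [De [Do [Se So]]]]].
    exists (Bdisj s0 i pe po), sb. split; [exact Sb|split].
    + eapply Bdisj_depth; eauto.
    + apply (step hK T hT z0 s0 i _ _ (fun u => lpar K lt b (rec (other i) u) false)
              (fun u => lpar K lt b (rec (other i) u) true) b H01 Se So).
      * intro u. destruct (lpar_total hK b (rec (other i) u) (rec_record _ u) L) as [[|] H]; auto.
      * intros u H1 H2. discriminate (lpar_uniq hK _ _ _ _ H1 H2).
      * intro w. rewrite <- (He i w b L).
        destruct (lpar_total hK b (rec (other i) w) (rec_record _ w) L) as [e0 H0].
        assert (X : forall u : W K lt, lpar K lt b (rec (other i) u) e0 <->
                    (exists e, lpar K lt b (rec (other i) u) e /\ lpar K lt b (rec (other i) w) e)).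
        { intro u; split; [intro; exists e0; auto|].
          intros [e [E1 E2]]. rewrite (lpar_uniq hK _ _ _ _ H0 E2). exact E1. }
        destruct e0; [right|left]; apply mu_ext; exact X.
  - destruct (IH g (proj1 G) (other i)) as [p [s [Sg [Dp Ep]]]].
    rewrite <- (succ_uniq hK _ _ _ G Sg) in Dp.
    exists (Bdisj s0 i p (ENeg K lt p)), sb. split; [exact Sb|split].
    + eapply Bdisj_depth; [exact Dp|constructor; exact Dp|exact Sb].
    + apply (step hK T hT z0 s0 i _ _ (fun u => rec (other i) u g = true)
              (fun u => rec (other i) u g = false) b H01 Ep).
      * intro u. simpl. rewrite Ep. destruct (rec (other i) u g); split; intro; try discriminate; try tauto; exfalso; auto.
      * intro u. destruct (rec (other i) u g); auto.
      * intros u E1 E2; rewrite E1 in E2; discriminate.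
      * intro w. rewrite <- (Hd i w g b G).
        destruct (rec (other i) w g) eqn:E; [left|right]; apply mu_ext; intro u; tauto.
Qed.

Theorem lemma9 (K : Type) (lt : K -> K -> Prop)
  (hK : regular_infinite_cardinal K lt)
  (T : player -> W K lt -> (W K lt -> Prop) -> R)
  (hT : star_type_space K lt T) :
  (* (i) *)
  ((forall w, sem K lt T (EAtom K lt (fun x => x = h)) w <-> w0 w = h) /\
   (forall w, sem K lt T (EAtom K lt (fun x => x = t)) w <-> w0 w = t) /\
   (forall z, is_zero K lt z -> Depth K lt (EAtom K lt (fun x => x = h)) z) /\
   (forall z, is_zero K lt z -> Depth K lt (EAtom K lt (fun x => x = t)) z)) /\
  (* (ii) *)
  (forall (i : player) (b s : K), is_succ K lt b s ->
     exists phi0 phi1 : expr K lt,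
       Depth K lt phi0 s /\ Depth K lt phi1 s /\
       (forall w, sem K lt T phi1 w <-> rec i w b = true) /\
       (forall w, sem K lt T phi0 w <-> rec i w b = false)) /\
  (* (iii) *)
  (forall (i : player) (l : K), is_limit K lt l ->
     exists phie phio : expr K lt,
       Depth K lt phie l /\ Depth K lt phio l /\
       (forall w, sem K lt T phie w <-> lpar K lt l (rec i w) false) /\
       (forall w, sem K lt T phio w <-> lpar K lt l (rec i w) true)).
Proof.
  split; [|split].
  - split; [intro; simpl; tauto|split; [intro; simpl; tauto|split; intros; constructor; assumption]].
  - intros i b s S. destruct (P_all hK T hT b i) as [p [s' [S' [Dp Ep]]]].
    rewrite <- (succ_uniq hK _ _ _ S S') in Dp.
    exists (ENeg K lt p), p. split; [constructor; exact Dp|split; [exact Dp|split; [exact Ep|]]].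
    intro w. simpl. rewrite Ep. destruct (rec i w b); split; intro; try discriminate; auto.
    exfalso; auto.
  - intros i l L. apply (Q_of_P hK T i l L). intros d _. apply P_all; assumption.
Qed.
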